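(* Let $\widehat{\mathcal T}_\bullet$ be an arbitrary hierarchical mesh. Then $\Pi_\bullet(\widehat T)\subseteq\mathcal N_\bullet(\widehat T)$ for all $\widehat T\in\widehat{\mathcal T}_\bullet$, where $\Pi_\bullet(\widehat T)=\{\widehat T'\in\widehat{\mathcal T}_\bullet:\widehat T'\cap\widehat T\ne\emptyset\}$.
   Context: Parameter domain $\widehat\Omega=(0,1)^d$, $d\ge2$; degrees $p_1,\dots,p_d\ge1$. For each $i$, $\widehat{\mathcal K}^0_i$ is a $p_i$-open knot vector in $[0,1]$ (first $p_i+1$ knots $0$, last $p_i+1$ knots $1$, interior multiplicities $\le p_i$); $\widehat{\mathcal K}^{k+1}_i$ arises from $\widehat{\mathcal K}^k_i$ by inserting each nondegenerate span's midpoint once. $\widehat{\mathcal B}^k$: tensor-product B-splines of degree $(p_1,\dots,p_d)$ for $\widehat{\mathcal K}^k$; $\widehat{\mathcal T}^k$: closed cells of level $k$. A hierarchical mesh is given by closed sets $[0,1]^d=\widehat\Omega^0_\bullet\supseteq\widehat\Omega^1_\bullet\supseteq\cdots$, each $\widehat\Omega^k_\bullet$ ($k\ge1$) a union of cells of $\widehat{\mathcal T}^{k-1}$, eventually empty; mesh $\widehat{\mathcal T}_\bullet=\bigcup_k\{\widehat T\in\widehat{\mathcal T}^k:\widehat T\subseteq\widehat\Omega^k_\bullet,\widehat T\not\subseteq\widehat\Omega^{k+1}_\bullet\}$; hierarchical basis $\widehat{\mathcal H}_\bullet=\bigcup_k\{\widehat\beta\in\widehat{\mathcal B}^k:{\rm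 supp}\,\widehat\beta\subseteq\widehat\Omega^k_\bullet,{\rm supp}\,\widehat\beta\not\subseteq\widehat\Omega^{k+1}_\bullet\}$. Neighbors $\mathcal N_\bullet(\widehat T)=\{\widehat T'\in\widehat{\mathcal T}_\bullet:\exists\widehat\beta\in\widehat{\mathcal H}_\bullet,\ \widehat T,\widehat T'\subseteq{\rm supp}\,\widehat\beta\}$. *)

(* Defs.v *)
From Stdlib Require Import Reals List Arith.
Import ListNotations.
Open Scope R_scope.

(* Points of R^d are functions nat -> R; only coordinates i < d are used. *)
Definition point := nat -> R.
Definition rset := point -> Prop.
Definition subset (A B : rset) : Prop := forall x, A x -> B x.

Definition knot (K : list R) (j : nat) : R := nth j K 0.

Fixpoint refine (K : list R) : list R :=
  match K with
  | a :: ((b :: _) as t) =>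
      if Rlt_dec a b then a :: (a + b) / 2 :: refine t else a :: refine t
  | _ => K
  end.

(* p-open knot vector in [0,1]: sorted, first p+1 knots 0, last p+1 knots 1
   (0 and 1 have multiplicity exactly p+1), interior multiplicities <= p *)
Definition p_open (p : nat) (K : list R) : Prop :=
  (2 * (p + 1) <= length K)%nat /\
  (forall j, (S j < length K)%nat -> knot K j <= knot K (S j)) /\
  (forall j, (j <= p)%nat -> knot K j = 0) /\
  (forall j, (j <= p)%nat -> knot K (length K - 1 - j) = 1) /\
  0 < knot K (p + 1) /\ knot K (length K - p - 2) < 1 /\
  (forall x, 0 < x < 1 -> (count_occ Req_dec_T K x <= p)%nat).

Definition lknots (K0 : nat -> list R) (k i : nat) : list R :=
  Nat.iter k refine (K0 i).

Definition is_bspline (d : nat) (p : nat -> nat) (K0 : nat -> list R)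
  (k : nat) (j : nat -> nat) : Prop :=
  forall i, (i < d)%nat -> (j i + p i + 1 < length (lknots K0 k i))%nat.

Definition bsupp (d : nat) (p : nat -> nat) (K0 : nat -> list R)
  (k : nat) (j : nat -> nat) : rset :=
  fun x => forall i, (i < d)%nat ->
    knot (lknots K0 k i) (j i) <= x i <= knot (lknots K0 k i) (j i + p i + 1).

Definition is_cell (d : nat) (K0 : nat -> list R) (k : nat) (c : nat -> nat) : Prop :=
  forall i, (i < d)%nat ->
    (c i + 1 < length (lknots K0 k i))%nat /\
    knot (lknots K0 k i) (c i) < knot (lknots K0 k i) (c i + 1).

Definition cell (d : nat) (K0 : nat -> list R) (k : nat) (c : nat -> nat) : rset :=
  fun x => forall i, (i < d)%nat ->
    knot (lknots K0 k i) (c i) <= x i <= knot (lknots K0 k i) (c i + 1).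

Definition hier_domains (d : nat) (K0 : nat -> list R) (Omega : nat -> rset) : Prop :=
  (forall x, Omega 0%nat x <-> forall i, (i < d)%nat -> 0 <= x i <= 1) /\
  (forall k, exists C : (nat -> nat) -> Prop,
      (forall c, C c -> is_cell d K0 k c) /\
      (forall x, Omega (S k) x <-> exists c, C c /\ cell d K0 k c x)) /\
  (forall k, subset (Omega (S k)) (Omega k)) /\
  (exists N, forall k, (N <= k)%nat -> forall x, ~ Omega k x).

Definition in_mesh (d : nat) (K0 : nat -> list R) (Omega : nat -> rset)
  (k : nat) (c : nat -> nat) : Prop :=
  is_cell d K0 k c /\ subset (cell d K0 k c) (Omega k) /\
  ~ subset (cell d K0 k c) (Omega (S k)).

Definition in_hbasis (d : nat) (p : nat -> nat) (K0 : nat -> list R)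
  (Omega : nat -> rset) (k : nat) (j : nat -> nat) : Prop :=
  is_bspline d p K0 k j /\ subset (bsupp d p K0 k j) (Omega k) /\
  ~ subset (bsupp d p K0 k j) (Omega (S k)).

(* (k',c') is in N(T) for T = cell (k,c) *)
Definition neighbor (d : nat) (p : nat -> nat) (K0 : nat -> list R)
  (Omega : nat -> rset) (k : nat) (c : nat -> nat) (k' : nat) (c' : nat -> nat) : Prop :=
  in_mesh d K0 Omega k' c' /\
  exists kb jb, in_hbasis d p K0 Omega kb jb /\
    subset (cell d K0 k c) (bsupp d p K0 kb jb) /\
    subset (cell d K0 k' c') (bsupp d p K0 kb jb).

Definition in_patch (d : nat) (K0 : nat -> list R) (Omega : nat -> rset)
  (k : nat) (c : nat -> nat) (k' : nat) (c' : nat -> nat) : Prop :=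
  in_mesh d K0 Omega k' c' /\
  exists x, cell d K0 k' c' x /\ cell d K0 k c x.

(* Main.v *)
Require Import Defs.
From Stdlib Require Import Reals List Arith Lia Lra Classical IndefiniteDescription.
Import ListNotations.
Open Scope R_scope.

Lemma refine_eq a b t : refine (a::b::t) = if Rlt_dec a b then a :: (a+b)/2 :: refine (b::t) else a :: refine (b::t).
Proof. reflexivity. Qed.

Lemma refine_head b t : exists r, refine (b::t) = b :: r.
Proof. destruct t as [|c t]. - exists []; reflexivity.
  - rewrite refine_eq. destruct (Rlt_dec b c); eexists; reflexivity. Qed.

Fixpoint srt (L : list R) : Prop :=
  match L with a :: ((b :: _) as t) => a <= b /\ srt t | _ => True end.

Lemma srt_refine L : srt L -> srt (refine L).
Proof.
  induction L as [|a t IH]; [simpl; auto|]. destruct t as [|b t]; [simpl; auto|].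
  intros [Hab Ht]. specialize (IH Ht). rewrite refine_eq.
  destruct (refine_head b t) as [r Hr].
  destruct (Rlt_dec a b).
  - rewrite Hr in *. simpl. repeat split; try lra. exact IH.
  - rewrite Hr in *. simpl. split; [lra|exact IH].
Qed.

Lemma Forall_refine (P : R -> Prop) L : (forall a b, P a -> P b -> P ((a+b)/2)) ->
  Forall P L -> Forall P (refine L).
Proof.
  intro HP. induction L as [|a t IH]; [simpl; auto|]. destruct t as [|b t]; [simpl; auto|].
  intro H. inversion H; subst. specialize (IH H3). rewrite refine_eq.
  inversion H3; subst.
  destruct (Rlt_dec a b); constructor; auto.
Qed.

Lemma srt_Forall a t : srt (a::t) -> Forall (Rle a) t.
Proof.
  revert a. induction t as [|b t IH]; intros a H; [constructor|].
  destruct H as [Hab Ht]. constructor; auto.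
  specialize (IH b Ht). eapply Forall_impl; [|exact IH]. intros; simpl in *; lra.
Qed.

Lemma count_zero b t y : srt (b::t) -> y < b -> count_occ Req_dec_T (refine (b::t)) y = 0%nat.
Proof.
  intros Hs Hy. apply count_occ_not_In. intro Hin.
  assert (HF : Forall (Rle b) (refine (b::t))).
  { apply Forall_refine. - intros; lra. - constructor; [lra|]. apply srt_Forall; auto. }
  rewrite Forall_forall in HF. specialize (HF _ Hin). lra.
Qed.

Lemma count_refine L x : srt L -> (count_occ Req_dec_T (refine L) x <= Nat.max (count_occ Req_dec_T L x) 1)%nat.
Proof.
  induction L as [|a t IH]; [simpl; lia|]. destruct t as [|b t]; [simpl; lia|].
  intros [Hab Ht]. specialize (IH Ht). rewrite refine_eq.
  destruct (Rlt_dec a b).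
  - cbn [count_occ]. destruct (Req_dec_T a x).
    + subst. destruct (Req_dec_T ((x+b)/2) x); [lra|].
      rewrite count_zero; auto. lia.
    + destruct (Req_dec_T ((a+b)/2) x).
      * rewrite count_zero; auto; [lia|lra].
      * exact IH.
  - cbn [count_occ]. destruct (Req_dec_T a x).
    + subst. cbn [count_occ] in IH |- *. destruct (Req_dec_T b x); [|lra]. lia.
    + exact IH.

Qed.

Lemma refine_map L : exists f : nat -> nat, (forall i, (f i < f (S i))%nat) /\
  forall i, (i < length L)%nat -> (f i < length (refine L))%nat /\ nth (f i) (refine L) 0 = nth i L 0.
Proof.
  induction L as [|a t IH]. { exists (fun i => i). split; [intros; lia|]. simpl; intros; lia. }
  destruct t as [|b t]. { exists (fun i => i). split; [intros; lia|]. simpl; intros. split; auto. }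
  destruct IH as [g [Hg1 Hg2]]. rewrite refine_eq. destruct (Rlt_dec a b).
  - exists (fun i => match i with 0 => 0 | S i => S (S (g i)) end)%nat. split.
    + intros [|i]; [lia|]. specialize (Hg1 i). lia.
    + intros [|i] Hi; cbn [length nth]; [split; auto; simpl; lia|]. simpl in Hi.
      destruct (Hg2 i) as [H1 H2]; [simpl; lia|]. split; [lia|]. exact H2.
  - exists (fun i => match i with 0 => 0 | S i => S (g i) end)%nat. split.
    + intros [|i]; [lia|]. specialize (Hg1 i). lia.
    + intros [|i] Hi; cbn [length nth]; [split; auto; simpl; lia|]. simpl in Hi.
      destruct (Hg2 i) as [H1 H2]; [simpl; lia|]. split; [lia|]. exact H2.
Qed.

Lemma mono_add (f : nat -> nat) : (forall i, (f i < f (S i))%nat) -> forall j n, (f j + n <= f (j + n))%nat.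
Proof. intros H j n. induction n; [rewrite !Nat.add_0_r; lia|]. specialize (H (j+n)%nat).
  replace (j + S n)%nat with (S (j+n)) by lia. lia. Qed.

Lemma srt_adj L : srt L -> forall j, (S j < length L)%nat -> nth j L 0 <= nth (S j) L 0.
Proof.
  induction L as [|a t IH]; [simpl; intros; lia|]. destruct t as [|b t]; [simpl; intros; lia|].
  intros [Hab Ht] [|j] Hj; [simpl; exact Hab|]. apply (IH Ht j). simpl in *; lia.
Qed.

Lemma srt_mono L : srt L -> forall i i', (i <= i')%nat -> (i' < length L)%nat -> nth i L 0 <= nth i' L 0.
Proof.
  intros Hs i i' Hle. induction Hle; intros; [lra|].
  apply Rle_trans with (nth m L 0); [apply IHHle; lia|]. apply srt_adj; auto.
Qed.

Lemma adj_srt L : (forall j, (S j < length L)%nat -> nth j L 0 <= nth (S j) L 0) -> srt L.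
Proof.
  induction L as [|a t IH]; [simpl; auto|]. destruct t as [|b t]; [simpl; auto|].
  intro H. split. - apply (H 0%nat). simpl; lia.
  - apply IH. intros j Hj. apply (H (S j)). simpl in *; lia.
Qed.

Lemma count_ge L z : forall s m, (forall idx, (s <= idx < s + m)%nat -> nth idx L 0 = z) ->
  (s + m <= length L)%nat -> (m <= count_occ Req_dec_T L z)%nat.
Proof.
  induction L as [|a t IH]; intros s m H Hl; [simpl in Hl; lia|].
  destruct s as [|s].
  - destruct m as [|m]; [lia|]. assert (a = z) by (apply (H 0%nat); lia). subst.
    rewrite count_occ_cons_eq; auto. assert (m <= count_occ Req_dec_T t z)%nat; [|lia].
    apply (IH 0%nat m); [|simpl in Hl; lia]. intros idx Hi. apply (H (S idx)). lia.
  - simpl. assert (m <= count_occ Req_dec_T t z)%nat.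
    { apply (IH s m); [|simpl in Hl; lia]. intros idx Hi. apply (H (S idx)). lia. }
    destruct (Req_dec_T a z); lia.
Qed.

Lemma max_ex (P : nat -> Prop) N n0 : P n0 -> (n0 <= N)%nat ->
  exists a, P a /\ (a <= N)%nat /\ forall a', P a' -> (a' <= N)%nat -> (a' <= a)%nat.
Proof.
  revert n0. induction N as [|N IH]; intros n0 H0 Hle.
  - exists 0%nat. assert (n0 = 0%nat) by lia. subst. repeat split; auto.
  - destruct (classic (P (S N))) as [HP|HP].
    + exists (S N). split; auto.
    + destruct (IH n0) as [a [Ha1 [Ha2 Ha3]]]; auto.
      { destruct (Nat.eq_dec n0 (S N)); [subst; contradiction|lia]. }
      exists a. split; auto. split; [lia|]. intros a' Ha' Hle'.
      destruct (Nat.eq_dec a' (S N)); [subst; contradiction|]. apply Ha3; auto; lia.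
Qed.

Lemma min_ex (P : nat -> Prop) n0 : P n0 -> exists b, P b /\ forall b', P b' -> (b <= b')%nat.
Proof.
  induction n0 as [n0 IH] using (well_founded_induction lt_wf). intro H.
  destruct (classic (exists m, (m < n0)%nat /\ P m)) as [[m [Hm1 Hm2]]|Hn].
  - exact (IH m Hm1 Hm2).
  - exists n0. split; auto. intros b' Hb'. destruct (le_lt_dec n0 b'); auto.
    exfalso. apply Hn. eauto.
Qed.

Lemma core (L : list R) (p lo hi : nat) (al be z : R) :
  srt L -> (forall x, 0<x<1 -> (count_occ Req_dec_T L x <= p)%nat) ->
  (lo + p + 1 <= hi)%nat -> (hi < length L)%nat ->
  nth lo L 0 <= al -> be <= nth hi L 0 -> al < be ->
  (forall idx, (idx < length L)%nat -> al < nth idx L 0 < be -> nth idx L 0 = z /\ 0 < z < 1) ->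
  exists j, (lo <= j)%nat /\ (j + p + 1 <= hi)%nat /\ nth j L 0 <= al /\ be <= nth (j+p+1) L 0.
Proof.
  intros Hs Hc Hlh Hhi Hlo Hbe Hab Hz.
  destruct (max_ex (fun a => (lo <= a)%nat /\ nth a L 0 <= al) hi lo) as [a [[Ha0 Ha1] [Ha2 Ha3]]].
  { split; auto. } { lia. }
  destruct (min_ex (fun b => (b <= hi)%nat /\ be <= nth b L 0) hi) as [b [[Hb0 Hb1] Hb2]].
  { split; auto. }
  assert (Hab' : (a < b)%nat).
  { destruct (le_lt_dec b a) as [H|H]; auto. exfalso.
    assert (nth b L 0 <= nth a L 0) by (apply srt_mono; auto; lia). lra. }
  assert (Hrun : forall idx, (a < idx < b)%nat -> nth idx L 0 = z /\ 0 < z < 1).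
  { intros idx Hi. apply Hz; [lia|]. split.
    - destruct (Rle_or_lt (nth idx L 0) al) as [H|H]; auto.
      assert (idx <= a)%nat by (apply Ha3; [split; [lia|exact H]|lia]). lia.
    - destruct (Rle_or_lt be (nth idx L 0)) as [H|H]; auto.
      assert (b <= idx)%nat by (apply Hb2; split; [lia|exact H]). lia. }
  assert (Hba : (b <= a + p + 1)%nat).
  { destruct (Nat.eq_dec b (S a)) as [E|E]; [lia|].
    destruct (Hrun (S a)) as [_ Hz01]; [lia|].
    assert (b - a - 1 <= count_occ Req_dec_T L z)%nat.
    { apply (count_ge L z (S a) (b - a - 1)); [|lia]. intros idx Hi. apply Hrun. lia. }
    specialize (Hc z Hz01). lia. }
  exists (Nat.max lo (b - p - 1)). split; [lia|]. split; [lia|]. split.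
  - apply Rle_trans with (nth a L 0); auto. apply srt_mono; auto; lia.
  - apply Rle_trans with (nth b L 0); auto. apply srt_mono; auto; lia.
Qed.

Lemma win (L : list R) (p lo hi : nat) (u v u' v' t : R) :
  srt L -> (forall x, 0<x<1 -> (count_occ Req_dec_T L x <= p)%nat) ->
  (lo + p + 1 <= hi)%nat -> (hi < length L)%nat ->
  nth lo L 0 <= Rmin u u' -> Rmax v v' <= nth hi L 0 ->
  u < v -> u' < v' -> u <= t <= v -> u' <= t <= v' -> 0 <= u -> 0 <= u' -> v <= 1 -> v' <= 1 ->
  (forall idx, (idx < length L)%nat -> ~ (u < nth idx L 0 < v) /\ ~ (u' < nth idx L 0 < v')) ->
  exists j, (lo <= j)%nat /\ (j + p + 1 <= hi)%nat /\ nth j L 0 <= Rmin u u' /\ Rmax v v' <= nth (j+p+1) L 0.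
Proof.
  intros Hs Hc Hlh Hhi Hlo Hbe Huv Huv' Ht Ht' H1 H2 H3 H4 Hno.
  apply (core L p lo hi _ _ (Rmax u u')); auto.
  { unfold Rmin, Rmax; destruct (Rle_dec u u'); destruct (Rle_dec v v'); lra. }
  intros idx Hidx Hin. destruct (Hno idx Hidx) as [N1 N2].
  set (y := nth idx L 0) in *.
  assert (A1 : y <= u \/ v <= y).
  { destruct (Rle_or_lt y u); auto. destruct (Rle_or_lt v y); auto. exfalso; apply N1; lra. }
  assert (A2 : y <= u' \/ v' <= y).
  { destruct (Rle_or_lt y u'); auto. destruct (Rle_or_lt v' y); auto. exfalso; apply N2; lra. }
  revert Hin. unfold Rmin, Rmax; destruct (Rle_dec u u'); destruct (Rle_dec v v'); intros Hin;
  destruct A1; destruct A2; split; lra.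
Qed.

Lemma choice_d (d : nat) (P : nat -> nat -> Prop) :
  (forall i, (i < d)%nat -> exists n, P i n) -> exists f : nat -> nat, forall i, (i < d)%nat -> P i (f i).
Proof.
  intro H. assert (H' : forall i, exists n, (i < d)%nat -> P i n).
  { intro i. destruct (lt_dec i d) as [l|l]. - destruct (H i l) as [n Hn]. exists n; auto.
    - exists 0%nat. intro; contradiction. }
  exists (fun i => proj1_sig (constructive_indefinite_description _ (H' i))).
  intros i Hi. exact (proj2_sig (constructive_indefinite_description _ (H' i)) Hi).
Qed.

Lemma good (d : nat) (p : nat -> nat) (K0 : nat -> list R) :
  (forall i, (i < d)%nat -> (1 <= p i)%nat) ->
  (forall i, (i < d)%nat -> p_open (p i) (K0 i)) ->
  forall i, (i < d)%nat -> forall l, srt (lknots K0 l i) /\ Forall (fun y => 0 <= y <= 1) (lknots K0 l i) /\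
    (forall x, 0 < x < 1 -> (count_occ Req_dec_T (lknots K0 l i) x <= p i)%nat).
Proof.
  intros Hp Hopen i Hi l. induction l as [|l IH].
  - change (lknots K0 0 i) with (K0 i).
    destruct (Hopen i Hi) as [Hlen [Hsort [H0 [H1 [_ [_ Hcnt]]]]]]. unfold knot in *.
    assert (Hs : srt (K0 i)) by (apply adj_srt; auto).
    split; [exact Hs|]. split; [|exact Hcnt].
    apply Forall_forall. intros y Hy. destruct (In_nth (K0 i) y 0 Hy) as [idx [Hidx E]]. subst y.
    specialize (H0 0%nat ltac:(lia)). specialize (H1 0%nat ltac:(lia)).
    rewrite Nat.sub_0_r in H1. split.
    + apply Rle_trans with (nth 0 (K0 i) 0); [lra|]. apply srt_mono; auto; lia.
    + apply Rle_trans with (nth (length (K0 i) - 1) (K0 i) 0); [|lra]. apply srt_mono; auto; lia.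
  - change (lknots K0 (S l) i) with (refine (lknots K0 l i)).
    destruct IH as [A [B C]]. split; [apply srt_refine; auto|]. split.
    + apply Forall_refine; auto. intros; lra.
    + intros x Hx. pose proof (count_refine _ x A). specialize (C x Hx). specialize (Hp i Hi). lia.
Qed.

Lemma knot_lift (K0 : nat -> list R) i : forall n l idx, (idx < length (lknots K0 l i))%nat ->
  exists idx', (idx' < length (lknots K0 (n + l) i))%nat /\
    nth idx' (lknots K0 (n + l) i) 0 = nth idx (lknots K0 l i) 0.
Proof.
  induction n as [|n IH]; intros l idx H. { exists idx; simpl; auto. }
  destruct (IH l idx H) as [i1 [Hi1 E1]].
  change (lknots K0 (S n + l) i) with (refine (lknots K0 (n + l) i)).
  destruct (refine_map (lknots K0 (n + l) i)) as [f [_ Hf]].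
  destruct (Hf i1 Hi1) as [A B]. exists (f i1). split; auto. rewrite B; auto.
Qed.

Lemma noknot (K0 : nat -> list R) i k l cc : srt (lknots K0 k i) -> (l <= k)%nat ->
  (cc + 1 < length (lknots K0 k i))%nat ->
  forall idx, (idx < length (lknots K0 l i))%nat ->
  ~ (knot (lknots K0 k i) cc < nth idx (lknots K0 l i) 0 < knot (lknots K0 k i) (cc + 1)).
Proof.
  intros Hs Hl Hc idx Hidx. destruct (knot_lift K0 i (k - l) l idx Hidx) as [i' [Hi' E]].
  replace (k - l + l)%nat with k in * by lia. rewrite <- E. unfold knot.
  intros [A B]. destruct (le_lt_dec i' cc).
  - assert (nth i' (lknots K0 k i) 0 <= nth cc (lknots K0 k i) 0) by (apply srt_mono; auto; lia). lra.
  - assert (nth (cc+1) (lknots K0 k i) 0 <= nth i' (lknots K0 k i) 0) by (apply srt_mono; auto; lia). lra.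
Qed.

Lemma cover d p K0 k c l j :
  (forall i, (i < d)%nat -> knot (lknots K0 l i) (j i) <= knot (lknots K0 k i) (c i) /\
      knot (lknots K0 k i) (c i + 1) <= knot (lknots K0 l i) (j i + p i + 1)) ->
  subset (cell d K0 k c) (bsupp d p K0 l j).
Proof.
  intros H y Hy i Hi. destruct (H i Hi). destruct (Hy i Hi). split; lra.
Qed.

Theorem lemma5p3 (d : nat) (p : nat -> nat) (K0 : nat -> list R)
  (Omega : nat -> rset) :
  (2 <= d)%nat ->
  (forall i, (i < d)%nat -> (1 <= p i)%nat) ->
  (forall i, (i < d)%nat -> p_open (p i) (K0 i)) ->
  hier_domains d K0 Omega ->
  forall k c, in_mesh d K0 Omega k c ->
  forall k' c', in_patch d K0 Omega k c k' c' ->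
  neighbor d p K0 Omega k c k' c'.
Proof.
  intros Hd Hp Hopen Hdom k c Hm k' c' [Hm' [x [Hx' Hx]]].
  destruct Hdom as [HO0 _].
  pose proof (good d p K0 Hp Hopen) as G.
  pose proof Hm' as Hm'0.
  destruct Hm as [Hc [_ Hnot]]. destruct Hm' as [Hc' [_ Hnot']].
  set (m := Nat.min k k').
  set (U := fun i => Rmin (knot (lknots K0 k i) (c i)) (knot (lknots K0 k' i) (c' i))).
  set (V := fun i => Rmax (knot (lknots K0 k i) (c i + 1)) (knot (lknots K0 k' i) (c' i + 1))).
  assert (W : forall i l lo hi, (i < d)%nat -> (l <= m)%nat -> (lo + p i + 1 <= hi)%nat ->
     (hi < length (lknots K0 l i))%nat -> nth lo (lknots K0 l i) 0 <= U i ->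
     V i <= nth hi (lknots K0 l i) 0 ->
     exists j, (lo <= j)%nat /\ (j + p i + 1 <= hi)%nat /\ nth j (lknots K0 l i) 0 <= U i /\
       V i <= nth (j + p i + 1) (lknots K0 l i) 0).
  { intros i l lo hi Hi Hl H1 H2 H3 H4.
    destruct (G i Hi l) as [Gs [_ Gc]]. destruct (G i Hi k) as [Gks [GkF _]].
    destruct (G i Hi k') as [Gk's [Gk'F _]].
    destruct (Hc i Hi) as [Hci Hcu]. destruct (Hc' i Hi) as [Hci' Hcu'].
    rewrite Forall_forall in GkF, Gk'F.
    assert (B1 := GkF _ (nth_In _ 0 (Nat.lt_trans _ _ _ (Nat.lt_succ_diag_r _) ltac:(rewrite <- Nat.add_1_r; exact Hci)))).
    assert (B2 := GkF _ (nth_In _ 0 Hci)).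
    assert (B3 := Gk'F _ (nth_In _ 0 (Nat.lt_trans _ _ _ (Nat.lt_succ_diag_r _) ltac:(rewrite <- Nat.add_1_r; exact Hci')))).
    assert (B4 := Gk'F _ (nth_In _ 0 Hci')).
    unfold knot in *.
    apply (win (lknots K0 l i) (p i) lo hi _ _ _ _ (x i)); auto; try lra.
    - apply Hx; auto.
    - apply Hx'; auto.
    - intros idx Hidx. split.
      + apply (noknot K0 i k l (c i)); auto. unfold m in Hl; lia.
      + apply (noknot K0 i k' l (c' i)); auto. unfold m in Hl; lia. }
  assert (CV : forall l j, (forall i, (i < d)%nat -> knot (lknots K0 l i) (j i) <= U i /\
        V i <= knot (lknots K0 l i) (j i + p i + 1)) ->
        subset (cell d K0 k c) (bsupp d p K0 l j) /\ subset (cell d K0 k' c') (bsupp d p K0 l j)).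
  { intros l j H. split; apply cover; intros i Hi; destruct (H i Hi) as [A B]; unfold U, V in *;
    split; try (eapply Rle_trans; [exact A|]); try (eapply Rle_trans; [|exact B]);
    first [apply Rmin_l | apply Rmin_r | apply Rmax_l | apply Rmax_r]. }
  assert (FIN : forall l j, (forall i, (i < d)%nat -> (j i + p i + 1 < length (lknots K0 l i))%nat /\
        knot (lknots K0 l i) (j i) <= U i /\ V i <= knot (lknots K0 l i) (j i + p i + 1)) ->
        subset (bsupp d p K0 l j) (Omega l) -> ~ subset (bsupp d p K0 l j) (Omega (S l)) ->
        neighbor d p K0 Omega k c k' c').
  { intros l j H Hs Hns. split; [exact Hm'0|]. exists l, j.
    destruct (CV l j) as [C1 C2]. { intros i Hi; destruct (H i Hi) as [_ [A B]]; auto. }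
    split; [|split; auto]. split; [|split; auto]. intros i Hi; apply H; auto. }
  assert (CL : forall l, (l <= m)%nat -> neighbor d p K0 Omega k c k' c' \/
     exists j, (forall i, (i < d)%nat -> (j i + p i + 1 < length (lknots K0 l i))%nat /\
        knot (lknots K0 l i) (j i) <= U i /\ V i <= knot (lknots K0 l i) (j i + p i + 1)) /\
        subset (bsupp d p K0 l j) (Omega l)).
  { induction l as [|l IH]; intros Hl.
    - right.
      destruct (choice_d d (fun i n => (n + p i + 1 < length (lknots K0 0 i))%nat /\
        knot (lknots K0 0 i) n <= U i /\ V i <= knot (lknots K0 0 i) (n + p i + 1))) as [j Hj].
      { intros i Hi. destruct (Hopen i Hi) as [Hlen [_ [H0 [H1 _]]]].
        change (lknots K0 0 i) with (K0 i) in *.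
        specialize (H0 0%nat ltac:(lia)). specialize (H1 0%nat ltac:(lia)). rewrite Nat.sub_0_r in H1.
        destruct (W i 0%nat 0%nat (length (K0 i) - 1)%nat) as [n [A1 [A2 [A3 A4]]]]; auto; try lia.
        - unfold lknots; simpl. lia.
        - unfold knot in H0. change (lknots K0 0 i) with (K0 i). rewrite H0. unfold U.
          destruct (G i Hi k) as [_ [GkF _]]. destruct (G i Hi k') as [_ [Gk'F _]].
          destruct (Hc i Hi) as [Hci _]. destruct (Hc' i Hi) as [Hci' _].
          rewrite Forall_forall in GkF, Gk'F.
          assert (B2 := GkF _ (nth_In _ 0 (Nat.lt_trans _ _ _ (Nat.lt_succ_diag_r _) ltac:(rewrite <- Nat.add_1_r; exact Hci)))).
          assert (B4 := Gk'F _ (nth_In _ 0 (Nat.lt_trans _ _ _ (Nat.lt_succ_diag_r _) ltac:(rewrite <- Nat.add_1_r; exact Hci')))).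
          unfold knot. unfold Rmin; destruct (Rle_dec _ _); lra.
        - unfold knot in H1. unfold lknots; simpl. rewrite H1. unfold V.
          destruct (G i Hi k) as [_ [GkF _]]. destruct (G i Hi k') as [_ [Gk'F _]].
          destruct (Hc i Hi) as [Hci _]. destruct (Hc' i Hi) as [Hci' _].
          rewrite Forall_forall in GkF, Gk'F.
          assert (B2 := GkF _ (nth_In _ 0 Hci)).
          assert (B4 := Gk'F _ (nth_In _ 0 Hci')).
          unfold knot. unfold Rmax; destruct (Rle_dec _ _); lra.
        - exists n. split; [lia|]. split; auto. }
      exists j. split; auto. intros y Hy. apply HO0. intros i Hi.
      destruct (Hy i Hi) as [Y1 Y2]. destruct (Hj i Hi) as [J1 _].
      destruct (G i Hi 0%nat) as [_ [GF _]]. rewrite Forall_forall in GF.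
      assert (E1 := GF _ (nth_In _ 0 (Nat.le_lt_trans _ _ _ (Nat.le_add_r (j i) (p i + 1)) ltac:(rewrite Nat.add_assoc; exact J1)))).
      assert (E2 := GF _ (nth_In _ 0 J1)). unfold knot in *. lra.
    - destruct (IH ltac:(lia)) as [HN|[j [Hj Hs]]]; [left; exact HN|].
      destruct (classic (subset (bsupp d p K0 l j) (Omega (S l)))) as [HS|HS].
      2:{ left. eapply FIN; eauto. }
      right.
      destruct (choice_d d (fun i n => ((n + p i + 1 < length (lknots K0 (S l) i))%nat /\
        knot (lknots K0 (S l) i) n <= U i /\ V i <= knot (lknots K0 (S l) i) (n + p i + 1)) /\
        knot (lknots K0 l i) (j i) <= knot (lknots K0 (S l) i) n /\
        knot (lknots K0 (S l) i) (n + p i + 1) <= knot (lknots K0 l i) (j i + p i + 1))) as [j' Hj'].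
      { intros i Hi. destruct (Hj i Hi) as [J1 [J2 J3]].
        destruct (refine_map (lknots K0 l i)) as [f [Hf1 Hf2]].
        change (lknots K0 (S l) i) with (refine (lknots K0 l i)).
        destruct (Hf2 (j i) ltac:(lia)) as [F1 F2]. destruct (Hf2 (j i + p i + 1)%nat J1) as [F3 F4].
        pose proof (mono_add f Hf1 (j i) (p i + 1)) as MA. rewrite !Nat.add_assoc in MA.
        destruct (G i Hi (S l)) as [Gs _].
        change (refine (lknots K0 l i)) with (lknots K0 (S l) i) in *.
        destruct (W i (S l) (f (j i)) (f (j i + p i + 1)%nat)) as [n [A1 [A2 [A3 A4]]]]; auto; try lia.
        - rewrite F2. exact J2.
        - rewrite F4. exact J3.
        - exists n. unfold knot. split; [split; [lia|split; auto]|]. split.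
          + rewrite <- F2. apply srt_mono; auto; lia.
          + rewrite <- F4. apply srt_mono; auto; lia. }
      exists j'. split; [intros i Hi; apply Hj'; auto|].
      intros y Hy. apply HS. intros i Hi. destruct (Hy i Hi). destruct (Hj' i Hi) as [_ [A B]]. split; lra. }
  destruct (CL m (le_n m)) as [HN|[j [Hj Hs]]]; [exact HN|].
  apply (FIN m j Hj Hs). intro HS.
  destruct (CV m j) as [C1 C2]. { intros i Hi; destruct (Hj i Hi) as [_ [A B]]; auto. }
  destruct (Nat.le_ge_cases k k') as [L|L].
  - apply Hnot. unfold m in *. rewrite Nat.min_l in * by exact L. intros y Hy. auto.
  - apply Hnot'. unfold m in *. rewrite Nat.min_r in * by exact L. intros y Hy. auto.
Qed.
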